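(* Let $\mathcal L$ be a positively sloped line in $\mathbb{R}^n$ with parametrization $\iota_{\mathcal L}:\mathbb{R}\to\mathbb{R}^n$, and let $M$ be an $n$-parameter persistence module with a free resolution $F_\bullet\to M$. Then the $1$-parameter module $M^{\mathcal L}=M\circ\iota_{\mathcal L}$ has a free resolution $F^{\mathcal L}_\bullet$ whose generators are in bijection with those of $F_\bullet$: a generator $\vec a$ of $F_i$ corresponds to a generator $\vec a^{\mathcal L}$ of $F^{\mathcal L}_i$ of grade $\iota_{\mathcal L}^{-1}(\mathrm{push}_{\mathcal L}(\mathrm{gr}(\vec a)))$.
   Context: An $n$-parameter persistence module is a functor $(\mathbb{R}^n,\le)\to\mathbf{Vect}$, equivalently an $\mathbb{R}^n$-graded module over the monoid ring of $([0,\infty)^n,+)$; free modules are direct sums of shifted copies of this ring. A line $\mathcal L=\{t\vec m+\vec c\}$ is positively sloped if all $m_i>0$; $\iota_{\mathcal L}$ is its order-preserving parametrization, isometric for $\|\cdot\|_\infty$. $\mathrm{push}_{\mathcal L}(\vec p)=\min\{\vec a\in\mathcal L:\vec a\ge\vec p\}$ (coordinatewise order). *)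

(* Defs.v *)
From HB Require Import structures.
From mathcomp Require Import all_boot all_order all_algebra.
From mathcomp Require Import reals.
Set Implicit Arguments. Unset Strict Implicit. Unset Printing Implicit Defensive.
Import Order.TTheory GRing.Theory Num.Theory.
Local Open Scope ring_scope.

Record pmod (k : fieldType) (P : Type) (le : P -> P -> bool) := PMod {
  pobj : P -> lmodType k;
  pmap : forall a b, le a b -> pobj a -> pobj b;
  pmap_linear : forall a b (h : le a b) (r : k) (x y : pobj a),
      pmap h (r *: x + y) = r *: pmap h x + pmap h y;
  pmap_id : forall a (h : le a a) (x : pobj a), pmap h x = x;
  pmap_comp : forall a b c (hab : le a b) (hbc : le b c) (hac : le a c)
      (x : pobj a), pmap hac x = pmap hbc (pmap hab x)
}.

Record pmor (k : fieldType) (P : Type) (le : P -> P -> bool)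
    (M N : pmod k le) := PMor {
  pmor_fun : forall a, pobj M a -> pobj N a;
  pmor_linear : forall a (r : k) (x y : pobj M a),
      pmor_fun (r *: x + y) = r *: pmor_fun x + pmor_fun y;
  pmor_natural : forall a b (h : le a b) (x : pobj M a),
      pmor_fun (pmap h x) = pmap h (pmor_fun x)
}.

(* F is free with homogeneous basis (e_g)_{g : G}, e_g of grade gr g:
   i.e. F is the direct sum of the shifted free modules generated by the e_g. *)
Definition free_with_basis (k : fieldType) (P : Type) (le : P -> P -> bool)
    (F : pmod k le) (G : Type) (gr : G -> P) (e : forall g, pobj F (gr g)) : Prop :=
  forall p : P,
    (forall (m : nat) (f : 'I_m -> G) (hf : forall j, le (gr (f j)) p)
        (c : 'I_m -> k), injective f ->
        \sum_(j < m) c j *: pmap (hf j) (e (f j)) = 0 -> forall j, c j = 0)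
    /\
    (forall v : pobj F p, exists (m : nat) (f : 'I_m -> G)
        (hf : forall j, le (gr (f j)) p) (c : 'I_m -> k),
        v = \sum_(j < m) c j *: pmap (hf j) (e (f j))).

Record free_resolution (k : fieldType) (P : Type) (le : P -> P -> bool)
    (M : pmod k le) := FreeRes {
  fr_mod : nat -> pmod k le;
  fr_d : forall i, pmor (fr_mod i.+1) (fr_mod i);
  fr_eps : pmor (fr_mod 0) M;
  gens : nat -> Type;
  grade : forall i, gens i -> P;
  fr_basis : forall i (g : gens i), pobj (fr_mod i) (grade g);
  fr_free : forall i, free_with_basis (@fr_basis i);
  fr_eps_surj : forall p (v : pobj M p), exists x, pmor_fun fr_eps x = v;
  fr_exact0 : forall p (x : pobj (fr_mod 0) p),
      pmor_fun fr_eps x = 0 <-> exists y, pmor_fun (fr_d 0) y = x;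
  fr_exact : forall i p (x : pobj (fr_mod i.+1) p),
      pmor_fun (fr_d i) x = 0 <-> exists y, pmor_fun (fr_d i.+1) y = x
}.

Section Geometry.
Variables (R : realType) (n : nat).

Definition leV (a b : 'rV[R]_n) : bool := [forall i, a 0 i <= b 0 i].

Definition line (m c : 'rV[R]_n) (t : R) : 'rV[R]_n := t *: m + c.

Definition pos_sloped (m : 'rV[R]_n) : Prop := forall i, 0 < m 0 i.

Definition is_push (m c p a : 'rV[R]_n) : Prop :=
  [/\ exists t, a = line m c t,
      leV p a &
      forall t, leV p (line m c t) -> leV a (line m c t)].

Lemma line_mono (m c : 'rV[R]_n) (hm : pos_sloped m) (s t : R) :
  s <= t -> leV (line m c s) (line m c t).
Proof.
move=> st; apply/forallP => i; rewrite /line !mxE lerD2r.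
by rewrite ler_pM2r // hm.
Qed.

End Geometry.

Definition leR (R : realType) (s t : R) : bool := s <= t.

Section Restrict.
Variables (R : realType) (n : nat) (k : fieldType).
Variables (m c : 'rV[R]_n) (hm : pos_sloped m) (M : pmod k (@leV R n)).

Definition rmap (s t : R) (h : leR s t) : pobj M (line m c s) -> pobj M (line m c t) :=
  pmap (line_mono c hm h).

Definition restrict : pmod k (@leR R).
Proof.
refine (@PMod k R (@leR R) (fun t => pobj M (line m c t)) rmap _ _ _).
- by move=> a b h r x y; rewrite /rmap pmap_linear.
- by move=> a h x; rewrite /rmap pmap_id.
- by move=> a b c' hab hbc hac x; exact: pmap_comp.
Defined.
End Restrict.

(* Main.v *)
Require Import Defs.
From HB Require Import structures.
From mathcomp Require Import all_boot all_order all_algebra.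
From mathcomp Require Import reals.
Set Implicit Arguments. Unset Strict Implicit. Unset Printing Implicit Defensive.
Import Order.TTheory GRing.Theory Num.Theory.
Local Open Scope ring_scope.

Section Aux.
Variable R : realType.

Lemma foldr_max_ge (s : seq R) x0 x : x \in x0 :: s -> x <= foldr Num.max x0 s.
Proof.
elim: s => [|y s IH] /=; first by rewrite inE => /eqP->.
rewrite !inE => /orP[Hx|/orP[/eqP->|H]].
- by rewrite le_max; apply/orP; right; apply: IH; rewrite inE Hx.
- by rewrite le_max lexx.
- by rewrite le_max; apply/orP; right; apply: IH; rewrite inE H orbT.
Qed.

Lemma foldr_max_le (s : seq R) x0 t : x0 <= t -> all (fun x => x <= t) s ->
  foldr Num.max x0 s <= t.
Proof.
elim: s => [|y s IH] //= h0 /andP[hy hs].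
by rewrite ge_max hy IH.
Qed.

Variables (n : nat) (hn : (0 < n)%N) (m c : 'rV[R]_n) (hm : pos_sloped m).

Definition fr (p : 'rV[R]_n) (i : 'I_n) : R := (p 0 i - c 0 i) / m 0 i.
Definition tg (p : 'rV[R]_n) : R :=
  foldr Num.max (fr p (Ordinal hn)) [seq fr p i | i <- enum 'I_n].

Lemma tg_ge p i : fr p i <= tg p.
Proof.
apply: foldr_max_ge; rewrite inE; apply/orP; right.
by apply/mapP; exists i; rewrite ?mem_enum.
Qed.

Lemma leV_line p t : leV p (line m c t) = (tg p <= t).
Proof.
have key : forall i, (p 0 i <= (line m c t) 0 i) = (fr p i <= t).
  move=> i; rewrite /line !mxE /fr ler_pdivrMr ?hm //.
  by rewrite lerBlDr.
apply/idP/idP.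
- move/forallP=> H; apply: foldr_max_le; first by rewrite -key H.
  by apply/allP => x /mapP[i _ ->]; rewrite -key H.
- move=> H; apply/forallP => i; rewrite key.
  exact: le_trans (tg_ge p i) H.
Qed.

Lemma tg_push p : is_push m c p (line m c (tg p)).
Proof.
split; first by exists (tg p).
- by rewrite leV_line.
- by move=> t; rewrite leV_line => h; apply: line_mono.
Qed.

Variable k : fieldType.

Definition rmor (M N : pmod k (@leV R n)) (f : pmor M N) :
  pmor (restrict c hm M) (restrict c hm N).
Proof.
refine (@PMor _ _ _ (restrict c hm M) (restrict c hm N) (fun t => @pmor_fun _ _ _ _ _ f (line m c t)) _ _).
- by move=> a r x y; exact: (pmor_linear f).
- by move=> a b h x; exact: (pmor_natural f).
Defined.

Variable (M : pmod k (@leV R n)) (F : free_resolution M).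

Lemma gr_le i (g : gens F i) : leV (grade g) (line m c (tg (grade g))).
Proof. by rewrite leV_line. Qed.

Definition rbasis i (g : gens F i) : pobj (restrict c hm (fr_mod F i)) (tg (grade g)) :=
  Defs.pmap (gr_le g) (fr_basis g).

Lemma rfree i : free_with_basis (@rbasis i).
Proof.
move=> p; have [Hind Hspan] := @fr_free _ _ _ _ F i (line m c p).
split.
- move=> q f hf cf finj hs j.
  have hf' : forall j, leV (grade (f j)) (line m c p).
    by move=> j'; rewrite leV_line; exact: hf.
  apply: (Hind q f hf' cf finj).
  rewrite -[RHS]hs; apply: eq_bigr => j' _; congr (_ *: _).
  rewrite /rbasis /= /rmap; exact: pmap_comp.
- move=> v; have [q [f [hf [cf ->]]]] := Hspan v.
  have hf' : forall j, leR (tg (grade (f j))) p.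
    by move=> j'; rewrite /leR -leV_line; exact: hf.
  exists q, f, hf', cf; apply: eq_bigr => j' _; congr (_ *: _).
  rewrite /rbasis /= /rmap; exact: pmap_comp.
Qed.

Definition FL : free_resolution (restrict c hm M).
Proof.
refine (@FreeRes _ _ _ _ (fun i => restrict c hm (fr_mod F i))
  (fun i => rmor (fr_d F i)) (rmor (fr_eps F)) (gens F)
  (fun i g => tg (grade g)) rbasis rfree _ _ _).
- move=> p v; exact: fr_eps_surj.
- move=> p x; exact: (@fr_exact0 _ _ _ _ F (line m c p) x).
- move=> i p x; exact: (@fr_exact _ _ _ _ F i (line m c p) x).
Defined.

End Aux.

Theorem mainTheorem13 (R : realType) (k : fieldType) (n : nat) (hn : (0 < n)%N)
  (m c : 'rV[R]_n) (hm : pos_sloped m)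
  (M : pmod k (@leV R n)) (F : free_resolution M) :
  exists FL : free_resolution (restrict c hm M),
  exists sigma : forall i, gens F i -> gens FL i,
    (forall i, bijective (sigma i)) /\
    (forall i (g : gens F i),
       is_push m c (grade g) (line m c (grade (sigma i g)))).
Proof.
exists (FL hn c hm F), (fun i (g : gens F i) => g); split.
- by move=> i; exists id.
- by move=> i g; exact: tg_push.
Qed.
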